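(* Let $\lambda,p_l,p_{l+1},q_m,q_{m+1}\in\mathbb{C}$ be generic and consider the six equations on the cube vertex values $(u_0,u_1,u_2,u_{12},v_0,v_1,v_2,v_{12})$: \[ \mathcal A:\ u_{12}-u_0-\frac{q_{m+1}-p_l}{u_2}+\frac{q_m-p_{l+1}}{u_1}=0,\qquad \mathcal S:\ u_0-v_{12}-\frac{q_m-p_{l+1}}{u_1}+\frac{\lambda-p_l}{v_2}=0, \] \[ \mathcal B:\ (u_0-v_0)\Big(\frac{q_m-p_l}{u_0}+v_2\Big)-q_m+\lambda=0,\qquad \mathcal B':\ (u_1-v_1)\Big(\frac{q_m-p_{l+1}}{u_1}+v_{12}\Big)-q_m+\lambda=0, \] \[ \mathcal C:\ \frac{q_m-p_l}{u_0}-\frac{\lambda-p_l}{v_0}-u_1+v_1=0,\qquad \mathcal C':\ \frac{q_{m+1}-p_l}{u_2}-\frac{\lambda-p_l}{v_2}-u_{12}+v_{12}=0. \] For generic $u_0,u_1,u_2,v_0$, solve $\mathcal A=0$ for $u_{12}$, $\mathcal B=0$ for $v_2$, $\mathcal C=0$ for $v_1$. Then the three expressions for $v_{12}$ obtained from $\mathcal S=0$, $\mathcal B'=0$, $\mathcal C'=0$ coincide as rational functions of $u_0,u_1,u_2,v_0$, and the tetrahedron equations \[ \mathcal K_1:\ \Big(v_{12}+\frac{q_m-p_{l+1}}{u_1}\Big)\Big(\frac{q_m-p_l}{u_0}-\frac{\lambda-p_l}{v_0}\Big)-q_m+\lambda=0,\qquad \mathcal K_2:\ \Big(\frac{\lambda-p_l}{v_2}+u_0\Big)(u_1-v_1)-q_m+\lambda=0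 \] hold identically.
   Context: The non-autonomous dKdV equation is $u_{l+1,m+1}-u_{l,m}=\frac{q_{m+1}-p_l}{u_{l,m+1}}-\frac{q_m-p_{l+1}}{u_{l+1,m}}$ with parameter sequences $p_l,q_m\in\mathbb{C}$. In the cube, $u_0=u_{l,m}$, $u_1=u_{l+1,m}$, $u_2=u_{l,m+1}$, $u_{12}=u_{l+1,m+1}$, and $v_0,v_1,v_2,v_{12}$ are correspondingly placed values of an auxiliary function $v$. Generic means all denominators are nonzero. *)

(* Defs.v *)
From mathcomp Require Import all_boot all_algebra reals complex.
Set Implicit Arguments. Unset Strict Implicit. Unset Printing Implicit Defensive.
Local Open Scope ring_scope.

Section Eqs.
Variable R : realType.
Notation C := (R[i]).

Definition eqA (lam pl pl1 qm qm1 : C) (u0 u1 u2 u12 : C) : C :=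
  u12 - u0 - (qm1 - pl) / u2 + (qm - pl1) / u1.
Definition eqS (lam pl pl1 qm qm1 : C) (u0 u1 v2 v12 : C) : C :=
  u0 - v12 - (qm - pl1) / u1 + (lam - pl) / v2.
Definition eqB (lam pl pl1 qm qm1 : C) (u0 v0 v2 : C) : C :=
  (u0 - v0) * ((qm - pl) / u0 + v2) - qm + lam.
Definition eqB' (lam pl pl1 qm qm1 : C) (u1 v1 v12 : C) : C :=
  (u1 - v1) * ((qm - pl1) / u1 + v12) - qm + lam.
Definition eqC (lam pl pl1 qm qm1 : C) (u0 u1 v0 v1 : C) : C :=
  (qm - pl) / u0 - (lam - pl) / v0 - u1 + v1.
Definition eqC' (lam pl pl1 qm qm1 : C) (u2 u12 v2 v12 : C) : C :=
  (qm1 - pl) / u2 - (lam - pl) / v2 - u12 + v12.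
Definition eqK1 (lam pl pl1 qm qm1 : C) (u0 u1 v0 v12 : C) : C :=
  (v12 + (qm - pl1) / u1) * ((qm - pl) / u0 - (lam - pl) / v0) - qm + lam.
Definition eqK2 (lam pl pl1 qm qm1 : C) (u0 u1 v1 v2 : C) : C :=
  ((lam - pl) / v2 + u0) * (u1 - v1) - qm + lam.
End Eqs.

(* Main.v *)
Require Import Defs.
From mathcomp Require Import all_boot all_algebra reals complex.
From mathcomp Require Import ring.
Local Open Scope ring_scope.
Import GRing.Theory.

Lemma gen (F : fieldType) (lam pl pl1 qm qm1 : F)
    (u0 u1 u2 v0 u12 v2 v1 wS wB wC : F) :
  u0 != 0 -> u1 != 0 -> u2 != 0 -> v0 != 0 -> u0 - v0 != 0 ->
  v2 != 0 -> u1 - v1 != 0 ->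
  u12 - u0 - (qm1 - pl) / u2 + (qm - pl1) / u1 = 0 ->
  (u0 - v0) * ((qm - pl) / u0 + v2) - qm + lam = 0 ->
  (qm - pl) / u0 - (lam - pl) / v0 - u1 + v1 = 0 ->
  u0 - wS - (qm - pl1) / u1 + (lam - pl) / v2 = 0 ->
  (u1 - v1) * ((qm - pl1) / u1 + wB) - qm + lam = 0 ->
  (qm1 - pl) / u2 - (lam - pl) / v2 - u12 + wC = 0 ->
  [/\ wS = wB, wS = wC,
      (wS + (qm - pl1) / u1) * ((qm - pl) / u0 - (lam - pl) / v0) - qm + lam = 0 &
      ((lam - pl) / v2 + u0) * (u1 - v1) - qm + lam = 0].
Proof.
move=> nu0 nu1 nu2 nv0 nuv0 nv2 nuv1 hA hB hC hS hB' hC'.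
have e12 : u12 = u0 + (qm1 - pl) / u2 - (qm - pl1) / u1.
  apply/eqP; rewrite -subr_eq0; apply/eqP; rewrite -[RHS]hA; ring.
have ev1 : v1 = u1 - (qm - pl) / u0 + (lam - pl) / v0.
  apply/eqP; rewrite -subr_eq0; apply/eqP; rewrite -[RHS]hC; ring.
have eS : wS = u0 - (qm - pl1) / u1 + (lam - pl) / v2.
  apply/esym/eqP; rewrite -subr_eq0; apply/eqP; rewrite -[RHS]hS; ring.
have eC : wC = u12 + (lam - pl) / v2 - (qm1 - pl) / u2.
  apply/eqP; rewrite -subr_eq0; apply/eqP; rewrite -[RHS]hC'; ring.
have eB : wB = (qm - lam) / (u1 - v1) - (qm - pl1) / u1.
  apply/eqP; rewrite -subr_eq0; apply/eqP.
  have -> : wB - ((qm - lam) / (u1 - v1) - (qm - pl1) / u1)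
     = ((u1 - v1) * ((qm - pl1) / u1 + wB) - qm + lam) / (u1 - v1) by field; rewrite ?nuv1 ?nu1.
  by rewrite hB' mul0r.
have ev2 : v2 = ((qm - pl) * v0 - (lam - pl) * u0) / (u0 * (u0 - v0)).
  apply/eqP; rewrite -subr_eq0; apply/eqP.
  have -> : v2 - ((qm - pl) * v0 - (lam - pl) * u0) / (u0 * (u0 - v0))
     = ((u0 - v0) * ((qm - pl) / u0 + v2) - qm + lam) / (u0 - v0) by field; rewrite nuv0 nu0.
  by rewrite hB mul0r.
have nN : (qm - pl) * v0 - (lam - pl) * u0 != 0.
  by apply: contra nv2; move/eqP=> h; rewrite ev2 h mul0r.
split.
- rewrite eS eB ev1 ev2; field.
  have -> : u1 * (u0 * v0) - ((u1 * u0 - (qm - pl)) * v0 + (lam - pl) * u0) = (qm - pl) * v0 - (lam - pl) * u0 by ring.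
  by rewrite nu1 nv0 nu0 nN nuv0.
- by rewrite eS eC e12; ring.
- by rewrite eS ev2; field; rewrite nv0 nu0 ?nu1 nuv0 nN.
- by rewrite ev1 ev2; field; rewrite nv0 nu0 ?nu1 nuv0 nN.
Qed.

Theorem mainTheorem6 (R : realType) (lam pl pl1 qm qm1 : R[i])
    (u0 u1 u2 v0 u12 v2 v1 wS wB wC : R[i]) :
  (* genericity: all denominators are nonzero *)
  u0 != 0 -> u1 != 0 -> u2 != 0 -> v0 != 0 -> u0 - v0 != 0 ->
  v2 != 0 -> u1 - v1 != 0 ->
  (* u12, v2, v1 solve A = 0, B = 0, C = 0 *)
  eqA lam pl pl1 qm qm1 u0 u1 u2 u12 = 0 ->
  eqB lam pl pl1 qm qm1 u0 v0 v2 = 0 ->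
  eqC lam pl pl1 qm qm1 u0 u1 v0 v1 = 0 ->
  (* wS, wB, wC are the values of v12 obtained from S = 0, B' = 0, C' = 0 *)
  eqS lam pl pl1 qm qm1 u0 u1 v2 wS = 0 ->
  eqB' lam pl pl1 qm qm1 u1 v1 wB = 0 ->
  eqC' lam pl pl1 qm qm1 u2 u12 v2 wC = 0 ->
  [/\ wS = wB, wS = wC,
      eqK1 lam pl pl1 qm qm1 u0 u1 v0 wS = 0 &
      eqK2 lam pl pl1 qm qm1 u0 u1 v1 v2 = 0].
Proof. exact: gen. Qed.
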